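(* Let $G$ be a directed graph on vertex set $V$ with $|V|=n$ odd and integer edge weights in $[-M,M]$, $M\ge1$; extend $w$ to all ordered pairs $(u,v)\in V\times V$ (including $u=v$) by setting $w(u,v)=4M$ when $(u,v)$ is not an edge. Let $H=100M$. Let $G'$ be the undirected graph with vertex set $\{u_A,u_B,u_{B'},u_C,u_{C'}:u\in V\}$ and, for all $u,v\in V$ (not necessarily distinct), edges $u_A v_B$ of weight $3H+w(u,v)$, $u_A v_{B'}$ of weight $3H-w(u,v)$, $u_A v_C$ of weight $6H-w(v,u)$, $u_A v_{C'}$ of weight $3H+w(v,u)$, $u_Bv_C$ of weight $3H+w(u,v)$, and (for $u\ne v$) $u_Av_A$ of weight $H$. Let $G'_0$ be $G'$ with every weight multiplied by $4n$, and write $A=\{u_A:u\in V\}$. For $S\subseteq A$ let $G'_S$ be obtained from $G'_0$ by subtracting $1$ from the weight of every edge $s v_B$ and $s v_C$ with $s\in S$, and adding $1$ to the weight of every edge $s v_{B'}$ with $s\in S$. Then the median value $\min_{p}\sum_{q}d_{G'_S}(p,q)$ of $G'_S$ is odd if and only if $S$ contains a vertex $p$ attaining $\min_{p}\sum_q d_{G'}(p,q)$.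
   Context: $d_X(p,q)$ denotes shortest-path distance in the weighted graph $X$; sums $\sum_q$ range over all vertices of the graph. *)

(* Defs.v *)
From HB Require Import structures.
From mathcomp Require Import all_boot all_order all_algebra.
Set Implicit Arguments. Unset Strict Implicit. Unset Printing Implicit Defensive.
Import Order.TTheory GRing.Theory Num.Theory.
Local Open Scope ring_scope.

(* A weighted graph on a finite vertex type V is given by g : V -> V -> option int,
   g x y = Some c meaning an edge xy of weight c, None meaning no edge. *)

Fixpoint walk_weight (V : Type) (g : V -> V -> option int) (p : V) (s : seq V)
  : option int :=
  match s with
  | [::] => Some 0
  | q :: s' =>
      match g p q, walk_weight g q s' with
      | Some a, Some b => Some (a + b)
      | _, _ => None
      end
  end.

Definition is_dist (V : Type) (g : V -> V -> option int) (p q : V) (d : int) : Prop :=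
  (exists s, last p s = q /\ walk_weight g p s = Some d) /\
  (forall s c, last p s = q -> walk_weight g p s = Some c -> d <= c).

Definition wext (T : Type) (E : T -> T -> bool) (w0 : T -> T -> int) (M : int)
  (u v : T) : int := if E u v then w0 u v else 4 * M.

(* Vertices of G': pairs (u, c) with c : 'I_5 encoding the copy:
   0 = A, 1 = B, 2 = B', 3 = C, 4 = C'. *)
Definition clsA : 'I_5 := @Ordinal 5 0 isT.

(* One orientation of the edge list, with all weights multiplied by k and the
   +-1 perturbation for the A-vertices u_A with u in S.  G' = (k = 1, S = set0),
   G'_S = (k = 4n, S). *)
Definition gpre (T : finType) (w : T -> T -> int) (H k : int) (S : {set T})
  (x y : T * 'I_5) : option int :=
  let u := x.1 in let v := y.1 in
  let s : int := (nat_of_bool (u \in S))%:Z in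
  match nat_of_ord x.2, nat_of_ord y.2 with
  | 0%N, 1%N => Some (k * (3 * H + w u v) - s)
  | 0%N, 2%N => Some (k * (3 * H - w u v) + s)
  | 0%N, 3%N => Some (k * (6 * H - w v u) - s)
  | 0%N, 4%N => Some (k * (3 * H + w v u))
  | 1%N, 3%N => Some (k * (3 * H + w u v))
  | 0%N, 0%N => if u != v then Some (k * H) else None
  | _, _ => None
  end.

Definition gund (T : finType) (w : T -> T -> int) (H k : int) (S : {set T})
  (x y : T * 'I_5) : option int :=
  match gpre w H k S x y with
  | Some c => Some c
  | None => gpre w H k S y x
  end.

Definition is_median_value (V : finType) (D : V -> V -> int) (m : int) : Prop :=
  (exists p, m = \sum_q D p q) /\ (forall p, m <= \sum_q D p q).

(* Main.v *)
Require Import Defs.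
From HB Require Import structures.
From mathcomp Require Import all_boot all_order all_algebra.
From mathcomp Require Import zify.
Import Order.TTheory GRing.Theory Num.Theory.
Local Open Scope ring_scope.

Lemma walk_pot (V : Type) (g : V -> V -> option int) (psi : V -> int) :
  (forall x y c, g x y = Some c -> psi y <= psi x + c) ->
  forall s p c, walk_weight g p s = Some c -> psi (last p s) <= psi p + c.
Proof.
move=> hg; elim=> [|q s IH] p c /=; first by move=> [<-]; rewrite addr0.
case e1: (g p q) => [a|] //; case e2: (walk_weight g q s) => [b|] // [<-].
have := IH _ _ e2; have := hg _ _ _ e1; lia.
Qed.

Definition o1 : 'I_5 := @Ordinal 5 1 isT.
Definition o2 : 'I_5 := @Ordinal 5 2 isT.
Definition o3 : 'I_5 := @Ordinal 5 3 isT.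
Definition o4 : 'I_5 := @Ordinal 5 4 isT.

Section Gr.
Variable T : finType.
Variable w : T -> T -> int.
Variable M : int.
Hypothesis hM : 1 <= M.
Hypothesis hwb : forall u v, -M <= w u v <= 4*M.

Lemma gpre_ind (k : int) (S : {set T}) (P : T * 'I_5 -> T * 'I_5 -> int -> Prop) :
  (forall a b, a != b -> P (a, clsA) (b, clsA) (k * (100 * M))) ->
  (forall a b, P (a, clsA) (b, o1) (k * (3 * (100 * M) + w a b) - (nat_of_bool (a \in S))%:Z)) ->
  (forall a b, P (a, clsA) (b, o2) (k * (3 * (100 * M) - w a b) + (nat_of_bool (a \in S))%:Z)) ->
  (forall a b, P (a, clsA) (b, o3) (k * (6 * (100 * M) - w b a) - (nat_of_bool (a \in S))%:Z)) ->
  (forall a b, P (a, clsA) (b, o4) (k * (3 * (100 * M) + w b a))) ->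
  (forall a b, P (a, o1) (b, o3) (k * (3 * (100 * M) + w a b))) ->
  forall x y c, gpre w (100 * M) k S x y = Some c -> P x y c.
Proof.
move=> h0 h1 h2 h3 h4 h5 [a [i hi]] [b [j hj]] c.
rewrite /gpre /=.
case: i hi => [|[|[|[|[|i]]]]] hi; case: j hj => [|[|[|[|[|j]]]]] hj //=;
  rewrite ?(bool_irrelevance hi isT) ?(bool_irrelevance hj isT).
- by case: ifP => // hab [<-]; apply: h0.
- by move=> [<-]; apply: h1.
- by move=> [<-]; apply: h2.
- by move=> [<-]; apply: h3.
- by move=> [<-]; apply: h4.
- by move=> [<-]; apply: h5.
Qed.

Lemma foldmin_prop (f : T -> int) (s : seq T) :
  let r := foldr (fun x acc => Order.min (f x) acc) 0 s in
  [/\ r <= 0, (forall x, x \in s -> r <= f x) & (r = 0 \/ exists x, r = f x)].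
Proof.
elim: s => [|y s [IH1 IH2 IH3]] /=; first by split => //; left.
split.
- by rewrite ge_min IH1 orbT.
- move=> x; rewrite in_cons => /orP [/eqP ->|hx]; first by rewrite ge_min lexx.
  by rewrite ge_min IH2 ?orbT.
- case: (leP (f y) (foldr (fun x acc => Order.min (f x) acc) 0 s)) => h.
  + by right; exists y.
  + exact: IH3.
Qed.

Definition tmin (u v : T) : int :=
  foldr (fun x acc => Order.min (w u x + w x v + w v u) acc) 0 (enum T).

Lemma tmin_le0 u v : tmin u v <= 0.
Proof. by have [] := foldmin_prop (fun x => w u x + w x v + w v u) (enum T). Qed.
Lemma tmin_le u v x : tmin u v <= w u x + w x v + w v u.
Proof.
have [_ h _] := foldmin_prop (fun x => w u x + w x v + w v u) (enum T).
by apply: h; rewrite mem_enum.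
Qed.
Lemma tmin_cases u v : tmin u v = 0 \/ exists x, tmin u v = w u x + w x v + w v u.
Proof. by have [] := foldmin_prop (fun x => w u x + w x v + w v u) (enum T). Qed.
Lemma tmin_ge u v : -(3 * M) <= tmin u v.
Proof.
case: (tmin_cases u v) => [->|[x ->]]; first lia.
have := hwb u x; have := hwb x v; have := hwb v u; lia.
Qed.

Definition psiA (k : int) (S : {set T}) (u : T) (y : T * 'I_5) : int :=
  let v := y.1 in let s : int := (nat_of_bool (u \in S))%:Z in
  match nat_of_ord y.2 with
  | 0%N => if v == u then 0 else k * (100 * M)
  | 1%N => k * (3 * (100 * M) + w u v) - s
  | 2%N => k * (3 * (100 * M) - w u v) + s
  | 3%N => k * (6 * (100 * M) - w v u + tmin u v) - s
  | _ => k * (3 * (100 * M) + w v u)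
  end.

Lemma psiA_pot k S u (hk : 1 <= k) x y c :
  gund w (100 * M) k S x y = Some c -> psiA k S u y <= psiA k S u x + c.
Proof.
suff: forall x y c, gpre w (100 * M) k S x y = Some c ->
   psiA k S u y <= psiA k S u x + c /\ psiA k S u x <= psiA k S u y + c.
  move=> h; rewrite /gund; case e: (gpre _ _ _ _ x y) => [c'|].
    by move=> [<-]; case: (h _ _ _ e).
  by move=> e2; case: (h _ _ _ e2).
apply: gpre_ind => a b; rewrite /psiA /=.
- move=> hab; case: (a == u); case: (b == u); split; nia.
- have := hwb u b; have := hwb a b.
  case: (eqVneq a u) => [->|hau]; case: (u \in S); case: (a \in S) => /=; split; nia.
- have := hwb u b; have := hwb a b.
  case: (eqVneq a u) => [->|hau]; case: (u \in S); case: (a \in S) => /=; split; nia.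
- have := hwb b u; have := hwb b a; have := tmin_le0 u b; have := tmin_ge u b.
  case: (eqVneq a u) => [->|hau]; case: (u \in S); case: (a \in S) => /=; split; nia.
- have := hwb b u; have := hwb b a.
  case: (eqVneq a u) => [->|hau]; split; nia.
- have := hwb u a; have := hwb a b; have := hwb b u; have := tmin_le u b a.
  have := tmin_le0 u b; have := tmin_ge u b.
  case: (u \in S) => /=; split; nia.
Qed.

Lemma psiA_src k S u : psiA k S u (u, clsA) = 0.
Proof. by rewrite /psiA /= eqxx. Qed.

Lemma distA k S u y d (hk : 1 <= k) :
  is_dist (gund w (100 * M) k S) (u, clsA) y d -> d = psiA k S u y.
Proof.
move=> [[s [hl hs]] hmin].
have lo : psiA k S u y <= d.
  by have := @walk_pot _ _ _ (@psiA_pot k S u hk) _ _ _ hs; rewrite hl psiA_src add0r.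
apply/eqP; rewrite eq_le lo andbT.
case: y hmin {hl hs lo} => v [j hj] hmin.
case: j hj hmin => [|[|[|[|[|j]]]]] hj hmin //; rewrite ?(bool_irrelevance hj isT) in hmin *.
- case: (eqVneq v u) hmin => [->|hvu] hmin.
    by rewrite psiA_src; apply: (hmin [::] 0 erefl erefl).
  apply: le_trans (hmin [:: (v, clsA)] (k * (100 * M) + 0) erefl _) _.
    by rewrite /= /gund /gpre /= eq_sym hvu.
  by rewrite /psiA /= (negbTE hvu) addr0.
- apply: le_trans (hmin [:: (v, o1)] _ erefl erefl) _.
  by rewrite /psiA /= addr0.
- apply: le_trans (hmin [:: (v, o2)] _ erefl erefl) _.
  by rewrite /psiA /= addr0.
- case: (tmin_cases u v) => [ht|[x ht]].
    apply: le_trans (hmin [:: (v, o3)] _ erefl erefl) _.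
    by rewrite /psiA /= ht addr0 addr0.
  apply: le_trans (hmin [:: (x, o1); (v, o3)] _ erefl erefl) _.
  rewrite /psiA /= ht; lia.
- apply: le_trans (hmin [:: (v, o4)] _ erefl erefl) _.
  by rewrite /psiA /= addr0.
Qed.

Lemma sum5 (F : T * 'I_5 -> int) : \sum_q F q = \sum_v \sum_(c < 5) F (v, c).
Proof. by rewrite pair_bigA; apply: eq_bigr => -[]. Qed.

Lemma psiA_v k S u v :
  \sum_(c < 5) psiA k S u (v, c) =
  k * \sum_(c < 5) psiA 1 set0 u (v, c) - (nat_of_bool (u \in S))%:Z.
Proof.
rewrite !big_ord_recl !big_ord0 /psiA /= in_set0 /=.
case: (v == u); case: (u \in S) => /=; nia.
Qed.

Lemma psiA_sum k S u :
  \sum_q psiA k S u q =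
  k * \sum_q psiA 1 set0 u q - (nat_of_bool (u \in S))%:Z * (#|T|)%:Z.
Proof.
rewrite !sum5; under eq_bigr do rewrite psiA_v.
by rewrite sumrB -mulr_sumr sumr_const -mulr_natr natz.
Qed.

Lemma psiA_ub k S u (hk : 1 <= k) :
  \sum_q psiA k S u q <= 16 * (k * (100 * M)) * (#|T|)%:Z.
Proof.
rewrite sum5 -natz mulr_natr -sumr_const; apply: ler_sum => v _.
rewrite !big_ord_recl !big_ord0 /psiA /=.
have := tmin_le0 u v; have := hwb u v; have := hwb v u.
case: (v == u); case: (u \in S) => /=; nia.
Qed.

Definition psiN (k : int) (u : T) (i : 'I_5) (y : T * 'I_5) : int :=
  if (y.1 == u) && (nat_of_ord y.2 == nat_of_ord i) then 0
  else if nat_of_ord y.2 == 0%N then k * (3 * (100 * M) - 4 * M) - 1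
  else if ((nat_of_ord i == 1%N) && (nat_of_ord y.2 == 3%N)) ||
          ((nat_of_ord i == 3%N) && (nat_of_ord y.2 == 1%N))
       then k * (3 * (100 * M) - M)
  else 2 * (k * (3 * (100 * M) - 4 * M) - 1).

Lemma psiN_pot k S u (i : 'I_5) (hi : nat_of_ord i != 0%N) (hk : 1 <= k) x y c :
  gund w (100 * M) k S x y = Some c -> psiN k u i y <= psiN k u i x + c.
Proof.
suff: forall x y c, gpre w (100 * M) k S x y = Some c ->
   psiN k u i y <= psiN k u i x + c /\ psiN k u i x <= psiN k u i y + c.
  move=> h; rewrite /gund; case e: (gpre _ _ _ _ x y) => [c'|].
    by move=> [<-]; case: (h _ _ _ e).
  by move=> e2; case: (h _ _ _ e2).
apply: gpre_ind => a b; rewrite /psiN /=; [move=> _|..];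
  have := hwb a b; have := hwb b a; case: (a \in S); case: (a == u); case: (b == u);
  case: i hi => [[|[|[|[|[|i]]]]] hi] //= _; split; nia.
Qed.

Lemma psiN_lb k u (i : 'I_5) (hi : nat_of_ord i != 0%N) (hk : 1 <= k) :
  6 * (k * (3 * (100 * M) - 4 * M) - 1) * (#|T|)%:Z <= \sum_q psiN k u i q.
Proof.
rewrite sum5 -natz mulr_natr -sumr_const; apply: ler_sum => v _.
rewrite !big_ord_recl !big_ord0 /psiN /=.
case: (v == u); case: i hi => [[|[|[|[|[|i]]]]] hi] //= _; nia.
Qed.

Lemma distN k S u (i : 'I_5) (hi : nat_of_ord i != 0%N) (hk : 1 <= k) q d :
  is_dist (gund w (100 * M) k S) (u, i) q d -> psiN k u i q <= d.
Proof.
move=> [[s [hl hs]] _].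
have := @walk_pot _ _ _ (@psiN_pot k S u i hi hk) _ _ _ hs.
by rewrite hl /psiN /= !eqxx /= add0r.
Qed.
End Gr.
Lemma odd_abs_mod (m : int) : odd `|m|%N = ((`|m| %% 2)%N == 1%N).
Proof. by rewrite modn2; case: odd. Qed.

Theorem mainTheorem8 (T : finType) (E : T -> T -> bool) (w0 : T -> T -> int)
  (M : int) (S : {set T})
  (hn : odd #|T|) (hM : 1 <= M)
  (hw : forall u v, E u v -> - M <= w0 u v <= M)
  (D' DS : (T * 'I_5) -> (T * 'I_5) -> int)
  (hD' : forall p q,
     is_dist (gund (wext E w0 M) (100 * M) 1 set0) p q (D' p q))
  (hDS : forall p q,
     is_dist (gund (wext E w0 M) (100 * M) (4 * (#|T|)%:Z) S) p q (DS p q))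
  (m : int) (hm : is_median_value DS m) :
  odd `|m|%N <->
  (exists u, u \in S /\
     forall p, \sum_q D' (u, clsA) q <= \sum_q D' p q).
Proof.
have hwb : forall u v, -M <= wext E w0 M u v <= 4 * M.
  move=> u v; rewrite /wext; case e: (E u v); last lia.
  by have := hw u v e; lia.
have n0 : (0 < #|T|)%N by move: hn; case: #|T|.
have n2 : (#|T| %% 2 = 1)%N by rewrite modn2 hn.
set n := #|T| in n0 n2 hDS *.
set k : int := 4 * n%:Z in hDS *.
have hk : 1 <= k by rewrite /k; lia.
have h1 : (1 : int) <= 1 by [].
set PA := fun u => \sum_q psiA _ (wext E w0 M) M 1 set0 u q.
have eA' : forall u, \sum_q D' (u, clsA) q = PA u.
  by move=> u; apply: eq_bigr => q _; apply: (@distA _ _ _ hM hwb 1 set0 u q _ h1 (hD' _ _)).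
have eAS : forall u, \sum_q DS (u, clsA) q = k * PA u - (nat_of_bool (u \in S))%:Z * n%:Z.
  move=> u; rewrite -(@psiA_sum _ _ _ hM k S u).
  by apply: eq_bigr => q _; apply: (@distA _ _ _ hM hwb k S u q _ hk (hDS _ _)).
have ubA : forall u, PA u <= 16 * (1 * (100 * M)) * n%:Z.
  by move=> u; apply: (@psiA_ub _ _ _ hM hwb 1 set0 u h1).
have ubS : forall u, \sum_q DS (u, clsA) q <= 16 * (k * (100 * M)) * n%:Z.
  move=> u; apply: le_trans (@psiA_ub _ _ _ hM hwb k S u hk); rewrite le_eqVlt; apply/orP; left.
  by apply/eqP; apply: eq_bigr => q _; apply: (@distA _ _ _ hM hwb k S u q _ hk (hDS _ _)).
have lbN' : forall u (i : 'I_5), nat_of_ord i != 0%N ->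
    6 * (1 * (3 * (100 * M) - 4 * M) - 1) * n%:Z <= \sum_q D' (u, i) q.
  move=> u i hi; apply: le_trans (@psiN_lb _ _ hM 1 u i hi h1) _.
  by apply: ler_sum => q _; apply: (@distN _ _ _ hM hwb 1 set0 u i hi h1 q _ (hD' _ _)).
have lbNS : forall u (i : 'I_5), nat_of_ord i != 0%N ->
    6 * (k * (3 * (100 * M) - 4 * M) - 1) * n%:Z <= \sum_q DS (u, i) q.
  move=> u i hi; apply: le_trans (@psiN_lb _ _ hM k u i hi hk) _.
  by apply: ler_sum => q _; apply: (@distN _ _ _ hM hwb k S u i hi hk q _ (hDS _ _)).
have numS : 16 * (k * (100 * M)) * n%:Z < 6 * (k * (3 * (100 * M) - 4 * M) - 1) * n%:Z.
  have : 1 <= n%:Z by lia.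
  nia.
have num1 : 16 * (1 * (100 * M)) * n%:Z < 6 * (1 * (3 * (100 * M) - 4 * M) - 1) * n%:Z.
  have : 1 <= n%:Z by lia.
  nia.
case: hm => [[p0 hp0] hmin].
have [u0 ep0] : exists u0, p0 = (u0, clsA).
  case: p0 hp0 => u0 i0 hp0; case: (eqVneq (nat_of_ord i0) 0%N) => hi0.
    by exists u0; congr pair; apply: val_inj.
  have := lbNS u0 i0 hi0; have := ubS u0; have := hmin (u0, clsA); rewrite -hp0.
  lia.
subst p0; rewrite eAS in hp0.
have hminA : forall u, m <= k * PA u - (nat_of_bool (u \in S))%:Z * n%:Z.
  by move=> u; rewrite -eAS; apply: hmin.
split.
- move=> hodd.
  have u0S : u0 \in S.
    apply: contraTT hodd; rewrite odd_abs_mod => /negbTE h; rewrite h /= in hp0.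
    apply/negP => /eqP; rewrite /k in hp0; lia.
  exists u0; split => // -[u i].
  case: (eqVneq (nat_of_ord i) 0%N) => hi.
    have -> : i = clsA by apply: val_inj.
    rewrite !eA'; case: (leP (PA u0) (PA u)) => // hlt.
    have := hminA u; rewrite u0S /= in hp0.
    have hk0 : 0 <= k by lia.
    have := ler_wpM2l hk0 (ltW hlt).
    case: (u \in S) => /=; nia.
  rewrite eA'; have := lbN' u i hi; have := ubA u0; lia.
- move=> [u [uS hu]].
  have := hu (u0, clsA); rewrite !eA' => hle.
  have := hminA u; rewrite uS /= => hmu.
  have hk0 : 0 <= k by lia.
  have hh := ler_wpM2l hk0 hle.
  rewrite odd_abs_mod; apply/eqP.
  move: hp0; case: (u0 \in S) => /= hp0.
    rewrite /k in hp0 hmu hh; lia.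
  rewrite /k in hp0 hmu hh; lia.
Qed.
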